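(* If $|V|=6$, the complete graph $K_6$ on $V$ is B-factorizable. Equivalently, for every HAP table for $K_6$ (on 5 days), if $P(K_6,HA)$ is non-empty then it contains an integral point.
   Context: Let $V$ be a finite set with $|V|$ even. $K=\binom{V}{2}$ is the set of 2-element subsets of $V$. An equal partition of $V$ is an unordered pair $\{H,A\}$ of disjoint subsets with $H\cup A=V$ and $|H|=|A|=|V|/2$; $C=C(V)$ is the set of equal partitions. For $c=\{H,A\}\in C$, $B_c$ is the complete bipartite graph with parts $H$ and $A$. Vectors live in $\mathbb N^{K\cup C}$ with $\mathbb N=\{0,1,2,\dots\}$; $v|_K$ denotes the restriction to coordinates in $K$. For $E\subseteq K$, $\chi_E\in\{0,1\}^K$ is its indicator vector. For $E\subseteq K$ and $c\in C$, $\chi_{E,c}\in\mathbb N^{K\cup C}$ has $K$-components $\chi_E$ and $C$-components equal to the indicator of $c$. $PM(V)=\{\chi_{q,c}: c\in C,\ q\text{ a perfect matching of }B_c\}$. For $\mathcal M\subseteq\mathbb N^{K\cup C}$, $\mathbf N(\mathcal M)$ is the set of finite nonnegative integer combinations of elements of $\mathcal M$, and $\overline{\mathbf N}(\mathcal M)=\{v\in\mathbb N^{K\cup C}: kv\in\mathbf N(\mathcal M)\text{ for some integer }k\ge1\}$. A regular graph $G=(V,E)$ is B-factorizable if every $v\in\overline{\mathbf N}(PM(V))$ with $v|_K=\chi_E$ belongs to $\mathbf N(PM(V))$. For an $r$-regular graph $G=(V,E)$, a HAP table is a map assigning to each $d\in\{1,\dots,r\}$ an equal partition $\{H(d),A(d)\}\in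 C$. $P(G,HA)$ is the set of real vectors $(x_{e,d})_{e\in K,\,d\in\{1,\dots,r\}}$ satisfying: (1) $\sum_{d=1}^r x_{e,d}=1$ for every $e\in E$, and $x_{e,d}=0$ for every $e\in K\setminus E$ and every $d$; (2) for every $d$ and every $a\in V$, $\sum_{b\in V\setminus\{a\}}x_{\{a,b\},d}=1$; (3) $0\le x_{e,d}\le1$ for all $e\in E$ and all $d$; (4) $x_{\{a,b\},d}=0$ whenever $\{a,b\}\in E$ and $a,b$ are both in $H(d)$ or both in $A(d)$. *)

(* Defs.v *)
From HB Require Import structures.
From mathcomp Require Import all_boot.
Set Implicit Arguments. Unset Strict Implicit. Unset Printing Implicit Defensive.

Section Defs.
Variable V : finType.

Definition edge := {e : {set V} | #|e| == 2}.

(* C = equal partitions {H, A}: an unordered pair {H, V\H} with |H| = |V|/2 *)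
Definition is_eqpart (c : {set {set V}}) : bool :=
  [exists H : {set V}, (c == [set H; ~: H]) && (#|H|.*2 == #|V|)].
Definition eqpart := {c : {set {set V}} | is_eqpart c}.

(* vectors in N^(K ∪ C) (disjoint union of coordinate sets) *)
Definition vec := edge + eqpart -> nat.

Definition bip_edge (c : eqpart) (e : edge) : bool :=
  [exists H in val c, exists A in val c,
     (H != A) && [exists a in H, exists b in A, val e == [set a; b]]].

Definition is_pm (c : eqpart) (q : {set edge}) : bool :=
  [forall e in q, bip_edge c e] &&
  [forall x : V, #|[set e in q | x \in val e]| == 1].

Definition chi_qc (c : eqpart) (q : {set edge}) : vec :=
  fun i => match i with
           | inl e => nat_of_bool (e \in q)
           | inr c' => nat_of_bool (c' == c)
           end.

Definition in_N_PM (v : vec) : Prop :=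
  exists lam : eqpart * {set edge} -> nat,
    (forall p, ~~ is_pm p.1 p.2 -> lam p = 0) /\
    forall i, v i = \sum_(p : eqpart * {set edge}) lam p * chi_qc p.1 p.2 i.

Definition in_Nbar_PM (v : vec) : Prop :=
  exists k : nat, 1 <= k /\ in_N_PM (fun i => k * v i).

Definition B_factorizable (E : {set edge}) : Prop :=
  forall v : vec, (forall e : edge, v (inl e) = nat_of_bool (e \in E)) ->
    in_Nbar_PM v -> in_N_PM v.

End Defs.

(* Main.v *)
Require Import Defs.
From HB Require Import structures.
From mathcomp Require Import all_boot.
Set Implicit Arguments. Unset Strict Implicit. Unset Printing Implicit Defensive.
Definition HL : seq (seq nat) := [:: [:: 0; 1; 2]; [:: 0; 1; 3]; [:: 0; 1; 4]; [:: 0; 1; 5]; [:: 0; 2; 3]; [:: 0; 2; 4]; [:: 0; 2; 5]; [:: 0; 3; 4]; [:: 0; 3; 5]; [:: 0; 4; 5]].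
Definition EL : seq (nat * nat) := [:: (0, 1); (0, 2); (0, 3); (0, 4); (0, 5); (1, 2); (1, 3); (1, 4); (1, 5); (2, 3); (2, 4); (2, 5); (3, 4); (3, 5); (4, 5)].
Definition PML : seq (seq (nat * nat)) := [:: [:: (0, 1); (2, 3); (4, 5)]; [:: (0, 1); (2, 4); (3, 5)]; [:: (0, 1); (2, 5); (3, 4)]; [:: (0, 2); (1, 3); (4, 5)]; [:: (0, 2); (1, 4); (3, 5)]; [:: (0, 2); (1, 5); (3, 4)]; [:: (0, 3); (1, 2); (4, 5)]; [:: (0, 3); (1, 4); (2, 5)]; [:: (0, 3); (1, 5); (2, 4)]; [:: (0, 4); (1, 2); (3, 5)]; [:: (0, 4); (1, 3); (2, 5)]; [:: (0, 4); (1, 5); (2, 3)]; [:: (0, 5); (1, 2); (3, 4)]; [:: (0, 5); (1, 3); (2, 4)]; [:: (0, 5); (1, 4); (2, 3)]].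
Definition FL : seq (seq nat) := [:: [:: 0; 4; 8; 10; 12]; [:: 0; 5; 7; 9; 13]; [:: 1; 3; 7; 11; 12]; [:: 1; 5; 6; 10; 14]; [:: 2; 3; 8; 9; 14]; [:: 2; 4; 6; 11; 13]].
Definition CT : seq (seq bool) := [:: [:: false; false; false; false; false; false; false; true; true; false; true; true; false; true; true]; [:: false; false; false; false; true; true; false; false; false; true; false; true; true; false; true]; [:: false; false; false; true; false; true; true; false; true; false; false; false; true; true; false]; [:: false; false; false; true; true; false; true; true; false; true; true; false; false; false; false]; [:: false; true; true; false; false; false; false; false; false; true; true; false; true; true; false]; [:: true; false; true; false; false; false; true; true; false; false; false; false; true; false; true]; [:: true; true; false; false; false; false; true; false; true; true; false; true; false; false; false]; [:: true; true; false; true; true; false; false; false; false; false; false; false; false; true; true]; [:: true; false; true; true; false; true; false; false; false; false; true; true; false; false; false]; [:: false; true; true; false; true; true; false; true; true; false; false; false; false; false; false]].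

Definition inHL (i a : nat) := a \in nth [::] HL i.
Definition crossn (i : nat) (ab : nat * nat) := inHL i ab.1 != inHL i ab.2.
Definition hasv (y : nat) (ab : nat * nat) := (ab.1 == y) || (ab.2 == y).
Definition CTb i m := nth false (nth [::] CT i) m.
Definition PMm m := nth [::] PML m.
Definition FLf f := nth [::] FL f.

Definition good (l : seq nat) :=
  [&& size l == 10, all (fun x => x <= 2) l, sumn l == 5 &
   all (fun ab => has (fun i => (0 < nth 0 l i) && crossn i ab) (iota 0 10)) EL].

Fixpoint lists n : seq (seq nat) :=
  if n is n'.+1 then [seq x :: t | x <- [:: 0; 1; 2], t <- lists n'] else [:: [::]].
Fixpoint blists n : seq (seq bool) :=
  if n is n'.+1 then [seq x :: t | x <- [:: false; true], t <- blists n'] else [:: [::]].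

Lemma in_lists l : all (fun x => x <= 2) l -> l \in lists (size l).
Proof.
elim: l => [|x l IH]; first by []. move=> /andP [hx hl].
change (x :: l \in [seq y :: t | y <- [:: 0; 1; 2], t <- lists (size l)]).
apply/allpairsP; exists (x, l) => /=; split; [|exact: IH|by []].
by move: hx; case: x => [|[|[|]]].
Qed.

Lemma in_blists l : l \in blists (size l).
Proof.
elim: l => [|x l IH]; first by [].
change (x :: l \in [seq y :: t | y <- [:: false; true], t <- blists (size l)]).
apply/allpairsP; exists (x, l) => /=; split; [|exact: IH|by []].
by case: x.
Qed.

Fixpoint srch (ms : seq nat) (cnt : seq nat) : option (seq nat) :=
  match ms with
  | [::] => Some [::]
  | m :: ms' =>
    let fix go cs := match cs with
      | [::] => None
      | i :: cs' => if (0 < nth 0 cnt i) && CTb i m then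
                      match srch ms' (set_nth 0 cnt i (nth 0 cnt i).-1) with
                      | Some a => Some (i :: a) | None => go cs' end
                    else go cs' end
    in go (iota 0 10)
  end.

Fixpoint solvef (fs : seq nat) l : option (nat * seq nat) :=
  match fs with
  | [::] => None
  | f :: fs' => match srch (FLf f) l with
               | Some a => Some (f, a) | None => solvef fs' l end
  end.

Definition valid (l : seq nat) (w : nat * seq nat) :=
  let: (f, a) := w in
  [&& f < 6, size a == 5, all (fun i => i < 10) a,
      all (fun i => count_mem i a == nth 0 l i) (iota 0 10) &
      all2 CTb a (FLf f)].

Definition okl l := if solvef (iota 0 6) l is Some w then valid l w else false.

Lemma big_check : all (fun l => good l ==> okl l) (lists 10).
Proof. vm_compute. reflexivity. Qed.

Lemma N_HL0 : all (fun i => inHL i 0) (iota 0 10).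
Proof. by vm_compute. Qed.
Lemma N_HLinj : all (fun i => all (fun j =>
   all (fun y => inHL i y == inHL j y) (iota 0 6) ==> (i == j)) (iota 0 10)) (iota 0 10).
Proof. by vm_compute. Qed.
Lemma N_HLcard : all (fun i => count (inHL i) (iota 0 6) == 3) (iota 0 10).
Proof. by vm_compute. Qed.
Lemma N_3sets : all (fun m => ((count id m == 3) && head false m) ==>
   has (fun i => m == [seq inHL i y | y <- iota 0 6]) (iota 0 10)) (blists 6).
Proof. by vm_compute. Qed.
Lemma N_EL : all (fun ab => (ab.1 < ab.2) && (ab.2 < 6)) EL.
Proof. by vm_compute. Qed.
Lemma N_ELuniq : uniq EL.
Proof. by vm_compute. Qed.
Lemma N_ELall : all (fun a => all (fun b => (a < b) ==> ((a, b) \in EL)) (iota 0 6)) (iota 0 6).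
Proof. by vm_compute. Qed.
Lemma N_ELinj : all (fun ab => all (fun ab' =>
   all (fun y => hasv y ab == hasv y ab') (iota 0 6) ==> (ab == ab')) EL) EL.
Proof. by vm_compute. Qed.
Lemma N_PML : all (fun m => all (fun ab => ab \in EL) (PMm m)) (iota 0 15).
Proof. by vm_compute. Qed.
Lemma N_PMdeg : all (fun m => all (fun y =>
   count (fun ab => (ab \in PMm m) && hasv y ab) EL == 1) (iota 0 6)) (iota 0 15).
Proof. by vm_compute. Qed.
Lemma N_FL : all (fun f => (size (FLf f) == 5) && all (fun m => m < 15) (FLf f) &&
   all (fun ab => count (fun m => ab \in PMm m) (FLf f) == 1) EL) (iota 0 6).
Proof. by vm_compute. Qed.
Lemma N_CT : all (fun i => all (fun m => CTb i m ==> all (crossn i) (PMm m)) (iota 0 15)) (iota 0 10).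
Proof. by vm_compute. Qed.
Lemma N_deg0 : count (hasv 0) EL == 5.
Proof. by vm_compute. Qed.
Lemma N_int : all (fun i => count (fun ab => ~~ crossn i ab) EL == 6) (iota 0 10).
Proof. by vm_compute. Qed.
Lemma N_match : all (fun bm =>
   all (fun y => count (hasv y) (mask bm EL) == 1) (iota 0 6) ==>
   all (fun i => count (fun ab => ~~ crossn i ab) (mask bm EL) <= 2) (iota 0 10)) (blists 15).
Proof. vm_compute. reflexivity. Qed.


Lemma sumb_count (T : Type) (s : seq T) (P : pred T) :
  \sum_(x <- s) (P x : nat) = count P s.
Proof. by rewrite -sum1_count [RHS]big_mkcond. Qed.

Lemma iotaP (P : nat -> bool) n : all P (iota 0 n) -> forall i, i < n -> P i.
Proof. by move=> /allP H i hi; apply: H; rewrite mem_iota. Qed.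

Section Abs.
Variables (V : finType) (g : 'I_6 -> V) (h : V -> 'I_6).
Hypotheses (gK : cancel g h) (hK : cancel h g).

Let g_inj : injective g := can_inj gK.
Let h_inj : injective h := can_inj hK.
Definition io (n : nat) : 'I_6 := inord n.
Definition hn (z : V) : nat := h z.

Lemma hn_lt z : hn z < 6. Proof. exact: ltn_ord. Qed.
Lemma hn_g y : y < 6 -> hn (g (io y)) = y.
Proof. by move=> hy; rewrite /hn gK /io inordK. Qed.
Lemma g_hn z : g (io (hn z)) = z.
Proof. by rewrite /io /hn inord_val hK. Qed.
Lemma eq_g z y : y < 6 -> (z == g (io y)) = (hn z == y).
Proof.
move=> hy; apply/eqP/eqP => [->|<-]; first exact: hn_g.
by rewrite g_hn.
Qed.

Lemma card_pre (Q : nat -> bool) : #|[set z : V | Q (hn z)]| = count Q (iota 0 6).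
Proof.
have -> : [set z : V | Q (hn z)] = g @: [set y : 'I_6 | Q y].
  apply/setP => z; rewrite inE; apply/idP/imsetP => [hQ|[y]].
    by exists (h z); rewrite ?inE // hK.
  by rewrite inE => hy ->; rewrite /hn gK.
rewrite card_imset //= -sum1dep_card.
by rewrite -(big_mkord Q (fun _ => 1)) sum1_count.
Qed.

Lemma cardV : #|V| = 6.
Proof. have := card_pre predT; rewrite count_predT size_iota => <-. by apply: eq_card => z; rewrite !inE. Qed.

Definition Graw i : {set V} := [set z | inHL i (hn z)].
Definition Praw i : {set {set V}} := [set Graw i; ~: Graw i].

Lemma cardG i : i < 10 -> #|Graw i| = 3.
Proof. by move=> hi; rewrite card_pre; apply/eqP; apply: (iotaP N_HLcard). Qed.

Lemma isep i : i < 10 -> is_eqpart (Praw i).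
Proof. by move=> hi; apply/existsP; exists (Graw i); rewrite eqxx cardG // cardV. Qed.

Definition d0 : eqpart V := Sub (Praw 0) (@isep 0 isT).
Definition P i : eqpart V := insubd d0 (Praw i).
Lemma valP i : i < 10 -> val (P i) = Praw i.
Proof. by move=> hi; rewrite /P insubdK //; exact: isep. Qed.

Lemma G_mem i y : y < 6 -> (g (io y) \in Graw i) = inHL i y.
Proof. by move=> hy; rewrite inE hn_g. Qed.
Lemma G0 i : i < 10 -> g (io 0) \in Graw i.
Proof. by move=> hi; rewrite G_mem //; apply: (iotaP N_HL0). Qed.
Lemma GneC i : i < 10 -> Graw i != ~: Graw i.
Proof.
move=> hi; apply/eqP => E; have := G0 hi.
by rewrite E in_setC G0.
Qed.

Lemma P_inj i j : i < 10 -> j < 10 -> P i = P j -> i = j.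
Proof.
move=> hi hj E; have : Graw i \in Praw j by rewrite -valP // -E valP // set21.
rewrite in_set2 => /orP [/eqP Eij|/eqP Eij]; last first.
  by have := G0 hi; rewrite Eij in_setC G0.
apply/eqP; move/allP: N_HLinj => /(_ i); rewrite mem_iota hi => /(_ isT).
move/allP => /(_ j); rewrite mem_iota hj => /(_ isT) /implyP; apply.
apply/allP => y; rewrite mem_iota /= => hy.
by rewrite -!G_mem // Eij.
Qed.

Lemma pick3 (H : {set V}) : #|H| = 3 -> g (io 0) \in H ->
  exists2 i, i < 10 & Graw i = H.
Proof.
move=> cH h0.
pose mk := [seq g (io y) \in H | y <- iota 0 6].
have smk : size mk = 6 by rewrite size_map size_iota.
have inb : mk \in blists 6 by rewrite -smk in_blists.
have cnt : count id mk = 3.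
  rewrite count_map -card_pre -cH; apply: eq_card => z.
  by rewrite !inE g_hn.
have := N_3sets; move/allP/(_ mk inb)/implyP; rewrite cnt.
have -> : head false mk = true by rewrite /mk /= h0.
move=> /(_ isT) /hasP [i].
rewrite mem_iota /= => hi /eqP E; exists i => //.
apply/setP => z; rewrite inE.
have hz := hn_lt z.
have : nth false mk (hn z) = nth false [seq inHL i y | y <- iota 0 6] (hn z) by rewrite E.
rewrite !(nth_map 0) ?size_iota // nth_iota // add0n g_hn => ->.
done.
Qed.

Lemma P_surj (c : eqpart V) : exists2 i, i < 10 & c = P i.
Proof.
case: c => C hC; move/existsP: (hC) => [H /andP [/eqP hCH hH]].
have cH : #|H| = 3.
  by move: hH; rewrite cardV; case: #|H| => [|[|[|[|]]]].
case h0 : (g (io 0) \in H).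
  have [i hi Ei] := pick3 cH h0; exists i => //.
  by apply: val_inj; rewrite /= valP // /Praw Ei hCH.
have cC : #|~: H| = 3 by have := cardsC H; rewrite cardV cH => /eqP; rewrite -[6]/(3 + 3) eqn_add2l => /eqP.
have h0' : g (io 0) \in ~: H by rewrite in_setC h0.
have [i hi Ei] := pick3 cC h0'; exists i => //.
by apply: val_inj; rewrite /= valP // /Praw Ei setCK hCH setUC.
Qed.


Definition Eraw (ab : nat * nat) : {set V} := [set g (io ab.1); g (io ab.2)].

Lemma ELlt ab : ab \in EL -> (ab.1 < ab.2) && (ab.2 < 6).
Proof. by move=> hab; move/allP: N_EL => /(_ ab hab). Qed.

Lemma Eraw2 ab : ab \in EL -> #|Eraw ab| == 2.
Proof.
move=> /ELlt /andP [h12 h2]; have h1 := ltn_trans h12 h2.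
suff nE : io ab.1 != io ab.2 by rewrite cards2 (inj_eq g_inj) nE.
apply/negP => /eqP E.
move: (congr1 (@nat_of_ord 6) E); rewrite /io !inordK // => E'.
by move: h12; rewrite E' ltnn.
Qed.

Definition e0 : edge V := Sub (Eraw (0,1)) (@Eraw2 (0,1) isT).
Definition psi ab : edge V := insubd e0 (Eraw ab).

Lemma val_psi ab : ab \in EL -> val (psi ab) = Eraw ab.
Proof. by move=> hab; rewrite /psi insubdK //; exact: Eraw2. Qed.

Lemma mem_psi ab z : ab \in EL -> (z \in val (psi ab)) = hasv (hn z) ab.
Proof.
move=> hab; have /andP [h12 h2] := ELlt hab; have h1 := ltn_trans h12 h2.
by rewrite val_psi // !inE !eq_g // /hasv ![_ == hn z]eq_sym.
Qed.

Lemma psi_inj : {in EL &, injective psi}.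
Proof.
move=> ab ab' h1 h2 E.
have H : all (fun y => hasv y ab == hasv y ab') (iota 0 6).
  apply/allP => y; rewrite mem_iota /= => hy.
  by rewrite -(hn_g hy) -!mem_psi // E.
apply/eqP; have K1 := N_ELinj; move/allP in K1.
have K2 := K1 ab h1; move/allP in K2.
have K3 := K2 ab' h2; move/implyP in K3; apply: K3.
exact: H.
Qed.

Lemma psi_surj (e : edge V) : exists2 ab, ab \in EL & e = psi ab.
Proof.
case: e => E hE; move/cards2P: (hE) => [x [y [xy hxy]]].
have hxy' : hn x != hn y.
  by apply: contra xy => /eqP E'; apply/eqP; apply: h_inj; apply: val_inj.
have hx := hn_lt x; have hy := hn_lt y.
have inEL u w : u < w -> w < 6 -> (u, w) \in EL.
  move=> hab hb; have K2 := iotaP N_ELall (ltn_trans hab hb).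
  have K3 := iotaP K2 hb.
  by move/implyP: K3; apply.
case: (ltngtP (hn x) (hn y)) => [lt|gt|eq].
- exists (hn x, hn y); first exact: inEL.
  by apply: val_inj; rewrite /= val_psi ?inEL // /Eraw /= !g_hn hxy.
- exists (hn y, hn x); first exact: inEL.
  by apply: val_inj; rewrite /= val_psi ?inEL // /Eraw /= !g_hn hxy setUC.
- by rewrite eq eqxx in hxy'.
Qed.

Lemma sumE (F : edge V -> nat) : \sum_e F e = \sum_(ab <- EL) F (psi ab).
Proof.
transitivity (\sum_(e <- [seq psi ab | ab <- EL]) F e); last by rewrite big_map.
apply: perm_big; apply: uniq_perm.
- exact: index_enum_uniq.
- by rewrite map_inj_in_uniq ?N_ELuniq //; exact: psi_inj.
- move=> e; rewrite mem_index_enum; have [ab hab ->] := psi_surj e.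
  by rewrite map_f.
Qed.

Lemma sumP (F : eqpart V -> nat) : \sum_c F c = \sum_(i <- iota 0 10) F (P i).
Proof.
transitivity (\sum_(c <- [seq P i | i <- iota 0 10]) F c); last by rewrite big_map.
apply: perm_big; apply: uniq_perm.
- exact: index_enum_uniq.
- rewrite map_inj_in_uniq ?iota_uniq //.
  by move=> i j; rewrite !mem_iota /= => hi hj; apply: P_inj.
- move=> c; rewrite mem_index_enum; have [i hi ->] := P_surj c.
  by rewrite map_f // mem_iota.
Qed.

Lemma sumEb (A : pred (edge V)) : \sum_e (A e : nat) = count (fun ab => A (psi ab)) EL.
Proof. by rewrite sumE sumb_count. Qed.


Lemma cardEL (A : pred (edge V)) : #|[set e | A e]| = count (fun ab => A (psi ab)) EL.
Proof. by rewrite -sum1dep_card big_mkcond /=; exact: sumEb. Qed.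

Lemma bipP i ab : i < 10 -> ab \in EL -> bip_edge (P i) (psi ab) = crossn i ab.
Proof.
move=> hi hab; have /andP [h12 h2] := ELlt hab; have h1 := ltn_trans h12 h2.
have E : val (psi ab) = [set g (io ab.1); g (io ab.2)] by rewrite val_psi.
rewrite /bip_edge valP //; apply/idP/idP.
- case/existsP => H /andP [HP /existsP [A /andP [AP /andP [HA /existsP [a /andP [aH /existsP [b /andP [bA /eqP hab']]]]]]]].
  have ha : hasv (hn a) ab by rewrite -mem_psi // hab' set21.
  have hb : hasv (hn b) ab by rewrite -mem_psi // hab' set22.
  have key : inHL i (hn a) != inHL i (hn b).
    move: HP AP HA aH bA; rewrite !in_set2.
    case/orP => /eqP -> ; case/orP => /eqP -> ; rewrite ?eqxx ?in_setC ?inE //=;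
      by case: (inHL i (hn a)); case: (inHL i (hn b)).
  move: ha hb key; case: (ab) => a0 b0; rewrite /hasv /crossn /=.
  case/orP => /eqP <-; case/orP => /eqP <- K //.
  + by move: K; rewrite eqxx.
  + by rewrite eq_sym.
  + by move: K; rewrite eqxx.
- move=> hc; case ha : (inHL i ab.1).
  + have hb : inHL i ab.2 = false by move: hc; rewrite /crossn ha; case: (inHL i ab.2).
    apply/existsP; exists (Graw i); rewrite set21 /=.
    apply/existsP; exists (~: Graw i); rewrite set22 GneC //=.
    apply/existsP; exists (g (io ab.1)); rewrite G_mem // ha /=.
    by apply/existsP; exists (g (io ab.2)); rewrite in_setC G_mem // hb /= E.
  + have hb : inHL i ab.2 = true by move: hc; rewrite /crossn ha; case: (inHL i ab.2).
    apply/existsP; exists (~: Graw i); rewrite set22 /=.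
    apply/existsP; exists (Graw i); rewrite set21 eq_sym GneC //=.
    apply/existsP; exists (g (io ab.1)); rewrite in_setC G_mem // ha /=.
    by apply/existsP; exists (g (io ab.2)); rewrite G_mem // hb /= E.
Qed.

Definition Qset m : {set edge V} := [set e | has (fun ab => e == psi ab) (PMm m)].

Lemma mem_Qset m ab : m < 15 -> ab \in EL -> (psi ab \in Qset m) = (ab \in PMm m).
Proof.
move=> hm hab; rewrite inE; apply/hasP/idP => [[ab' hab' /eqP E]|hab']; last first.
  by exists ab.
have hab'' : ab' \in EL by move/allP: (iotaP N_PML hm) => /(_ ab' hab').
by rewrite (psi_inj hab hab'' E).
Qed.

Lemma pmP i m : i < 10 -> m < 15 -> CTb i m -> is_pm (P i) (Qset m).
Proof.
move=> hi hm hct; apply/andP; split.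
- apply/forallP => e; apply/implyP => he; have [ab hab Ee] := psi_surj e.
  rewrite Ee bipP //; rewrite Ee mem_Qset // in he.
  have K := iotaP (iotaP N_CT hi) hm; move/implyP: K => /(_ hct) /allP; apply.
  exact: he.
- apply/forallP => x; rewrite cardEL.
  have hx := hn_lt x.
  rewrite (eq_in_count (a2 := fun ab => (ab \in PMm m) && hasv (hn x) ab)).
    exact: (iotaP (iotaP N_PMdeg hm) hx).
  by move=> ab hab; rewrite /= mem_Qset // mem_psi.
Qed.


Lemma sum_count (T : finType) (s : seq T) (F : T -> nat) :
  \sum_p count_mem p s * F p = \sum_(d <- s) F d.
Proof.
elim: s => [|d s IH]; first by rewrite big_nil big1 // => p _.
rewrite big_cons -IH /=.
under eq_bigr => p _ do rewrite mulnDl.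
rewrite big_split /=; congr (_ + _).
rewrite (bigD1 d) //= eqxx mul1n big1 ?addn0 // => p /negbTE.
by rewrite eq_sym => ->.
Qed.

Lemma mainAbs : B_factorizable [set: edge V].
Proof.
move=> v hv [k [hk [lam [hlam hsum]]]].
have F1 c : k * v (inr c) = \sum_p lam p * (c == p.1 : nat) by rewrite hsum.
have F2 e : k = \sum_p lam p * (e \in p.2 : nat).
  by move: (hsum (inl e)); rewrite hv inE muln1.
have Fpm p : lam p != 0 -> is_pm p.1 p.2.
  by move=> nz; apply/negPn; apply: contra nz => /hlam ->.
have HA (A : pred (edge V)) :
    \sum_e (A e : nat) * k = \sum_p lam p * \sum_e ((e \in p.2) && A e : nat).
  transitivity (\sum_e \sum_p (A e : nat) * (lam p * (e \in p.2 : nat))).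
    by apply: eq_bigr => e _; rewrite [in LHS](F2 e) big_distrr.
  rewrite exchange_big; apply: eq_bigr => p _; rewrite big_distrr.
  by apply: eq_bigr => e _; rewrite mulnCA mulnb andbC.
have S5 : \sum_p lam p = 5 * k.
  pose z0 := g (io 0).
  have A1 : (\sum_(e : edge V) (z0 \in val e : nat)) * k = 5 * k.
    rewrite (sumEb (fun e => z0 \in val e)); congr (_ * _).
    rewrite (eq_in_count (a2 := hasv 0)); first by rewrite (eqP N_deg0).
    by move=> ab hab; rewrite /= mem_psi // hn_g.
  rewrite -A1 big_distrl /= HA; apply: eq_bigr => p _.
  case: (eqVneq (lam p) 0) => [->|nz]; first by rewrite mul0n.
  move/andP: (Fpm p nz) => [_ /forallP /(_ z0) /eqP deg].
  have -> : \sum_(e : edge V) ((e \in p.2) && (z0 \in val e) : nat) = 1.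
    by rewrite -sum1dep_card big_mkcond in deg.
  by rewrite muln1.
have Sc : \sum_(i <- iota 0 10) k * v (inr (P i)) = \sum_p lam p.
  under eq_big_seq => i _ do rewrite F1.
  rewrite exchange_big; apply: eq_bigr => p _.
  rewrite -big_distrr /= -[RHS]muln1; congr (_ * _).
  rewrite -(sumP (fun c => (c == p.1 : nat))).
  rewrite (bigD1 p.1) //= eqxx big1 // => c /negbTE ->.
  done.
pose cs i := v (inr (P i)).
have Msplit i : \sum_p lam p * (P i == p.1 : nat) + \sum_p lam p * (P i != p.1 : nat) = 5 * k.
  rewrite -big_split -S5 /=; apply: eq_bigr => p _.
  by rewrite -mulnDr; case: (P i == p.1); rewrite muln1.
have M i : i < 10 -> cs i <= 2.
  move=> hi.
  have L6 : \sum_(e : edge V) (~~ bip_edge (P i) e : nat) * k = 6 * k.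
    rewrite -big_distrl /=.
    rewrite (sumEb (fun e => ~~ bip_edge (P i) e)); congr (_ * _).
    rewrite (eq_in_count (a2 := fun ab => ~~ crossn i ab)).
      by rewrite (eqP (iotaP N_int hi)).
    by move=> ab hab; rewrite /= bipP.
  have Xb p : lam p * \sum_(e : edge V) ((e \in p.2) && ~~ bip_edge (P i) e : nat)
              <= 2 * (lam p * (P i != p.1 : nat)).
    case: (eqVneq (lam p) 0) => [->|nz]; first by rewrite !mul0n muln0.
    have /andP [/forallP hb /forallP hdeg] := Fpm p nz.
    case: (eqVneq (P i) p.1) => [Ep|Np].
      rewrite big1 ?muln0 // => e _; case he: (e \in p.2) => //=.
      by move/implyP: (hb e) => /(_ he); rewrite Ep => ->.
    rewrite muln1 mulnC leq_pmul2r ?lt0n //.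
    rewrite (sumEb (fun e => (e \in p.2) && ~~ bip_edge (P i) e)).
    pose bm := [seq psi ab \in p.2 | ab <- EL].
    have inb : bm \in blists 15 by rewrite -[15]/(size bm) in_blists.
    have K := allP N_match bm inb; move/implyP: K.
    rewrite -filter_mask => K.
    have K2 : all (fun i0 => count (fun ab => ~~ crossn i0 ab) [seq ab <- EL | psi ab \in p.2] <= 2) (iota 0 10).
      apply: K; apply/allP => y hy'; cbv beta.
      have hy : y < 6 by rewrite mem_iota in hy'.
      have Hd := hdeg (g (io y)); rewrite cardEL in Hd.
      rewrite count_filter (eq_in_count (a2 := fun ab => (psi ab \in p.2) && (g (io y) \in val (psi ab)))).
        exact: Hd.
      by move=> ab hab; rewrite /= mem_psi // hn_g // andbC.
    have := iotaP K2 hi; rewrite count_filter.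
    rewrite (eq_in_count (a2 := fun ab => (psi ab \in p.2) && ~~ bip_edge (P i) (psi ab))) //.
    by move=> ab hab; rewrite /= bipP // andbC.
  have H6 : 6 * k <= 2 * \sum_p lam p * (P i != p.1 : nat).
    rewrite -L6 (HA (fun e => ~~ bip_edge (P i) e)) big_distrr /=.
    by apply: leq_sum => p _; exact: Xb.
  have HW := Msplit i; rewrite -F1 in HW.
  move: H6 HW; set W := (\sum_p lam p * (P i != p.1 : nat)) => H6 HW.
  have H3 : 3 * k <= W by rewrite -(leq_pmul2l (isT : 0 < 2)) mulnA.
  have : k * (cs i + 3) <= k * 5.
    by rewrite mulnDr [k * 3]mulnC [k * 5]mulnC -HW leq_add2l.
  by rewrite leq_pmul2l // => H; rewrite -(leq_add2r 3); exact: H.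
have Cov ab : ab \in EL -> exists2 i, i < 10 & (0 < cs i) && crossn i ab.
  move=> hab; pose e := psi ab.
  case: (boolP [exists p, 0 < lam p * (e \in p.2 : nat)]) => [/existsP [p hp]|/existsPn H]; last first.
    have := F2 e; rewrite big1 => [k0|p _]; first by move: hk; rewrite k0.
    by apply/eqP; move: (H p); rewrite lt0n negbK.
  move: hp; rewrite muln_gt0 lt0n lt0b => /andP [nz hep].
  have /andP [/forallP hb _] := Fpm p nz.
  have [i hi Ep] := P_surj p.1.
  exists i => //; apply/andP; split; last first.
    by rewrite -bipP // -Ep; move/implyP: (hb e); apply.
  have : 0 < k * cs i.
    rewrite /cs F1 (bigD1 p) //= Ep eqxx muln1.
    by apply: leq_trans (leq_addr _ _); rewrite lt0n.
  by rewrite muln_gt0 => /andP [].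
pose l := [seq cs i | i <- iota 0 10].
have nthl i : i < 10 -> nth 0 l i = cs i.
  by move=> hi; rewrite (nth_map 0) ?size_iota // nth_iota.
have sl : size l = 10 by rewrite size_map size_iota.
have gl : good l.
  apply/and4P; split.
  - by rewrite sl.
  - apply/allP => x /mapP [i]; rewrite mem_iota => /andP [_ hi] ->; exact: M.
  - have : k * sumn l = k * 5.
      by rewrite sumnE big_map big_distrr /= Sc S5 mulnC.
    by move/eqP; rewrite eqn_pmul2l.
  - apply/allP => ab hab; have [i hi hc] := Cov ab hab.
    by apply/hasP; exists i; rewrite ?mem_iota ?nthl.
have inl10 : l \in lists 10.
  rewrite -sl; apply: in_lists; apply/allP => x /mapP [i]; rewrite mem_iota => /andP [_ hi] ->.
  exact: M.
have := allP big_check l inl10; rewrite gl /= /okl.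
case E : (solvef (iota 0 6) l) => [[f a]|//] /and5P [hf /eqP sa alla cnta all2a].
have hFL := iotaP N_FL hf; move/andP: hFL => [/andP [/eqP sF allF] cntF].
move: all2a; rewrite all2E sa sF eqxx /= => /allP all2a.
pose ds := [seq (P x.1, Qset x.2) | x <- zip a (FLf f)].
exists (fun p => count_mem p ds); split.
  move=> p; apply: contraNeq => nz.
  have : p \in ds by rewrite -has_pred1 has_count lt0n.
  case/mapP => x hx ->.
  have hx1 : x.1 \in a by rewrite -[a](@unzip1_zip _ _ a (FLf f)) ?sa ?sF // map_f.
  have hx2 : x.2 \in FLf f by rewrite -[FLf f](@unzip2_zip _ _ a (FLf f)) ?sa ?sF // map_f.
  apply: pmP.
  - exact: (allP alla).
  - exact: (allP allF).
  - exact: (all2a x hx).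
move=> i; rewrite sum_count big_map.
case: i => [e|c].
- rewrite hv inE /=.
  have [ab hab ->] := psi_surj e.
  rewrite (eq_big_seq (fun x => (ab \in PMm x.2 : nat))); last first.
    move=> x hx.
    have hx2 : x.2 \in FLf f by rewrite -[FLf f](@unzip2_zip _ _ a (FLf f)) ?sa ?sF // map_f.
    by rewrite /= mem_Qset //; exact: (allP allF).
  rewrite (sumb_count _ (fun x => ab \in PMm x.2)).
  have -> : count (fun x => ab \in PMm x.2) (zip a (FLf f)) =
            count (fun m => ab \in PMm m) (unzip2 (zip a (FLf f))) by rewrite count_map.
  rewrite unzip2_zip ?sa ?sF //.
  move/allP: cntF => K; have K1 := K ab hab; by rewrite (eqP K1).
- have [i0 hi0 ->] := P_surj c.
  rewrite (sumb_count _ (fun x => P i0 == P x.1)).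
  have -> : count (fun x => P i0 == P x.1) (zip a (FLf f)) =
            count (fun j => P i0 == P j) (unzip1 (zip a (FLf f))) by rewrite count_map.
  rewrite unzip1_zip ?sa ?sF //.
  rewrite (eq_in_count (a2 := pred1 i0)); last first.
    move=> j hj; rewrite /=; apply/eqP/eqP => [E'|->] //.
    by apply: P_inj => //; exact: (allP alla).
  rewrite (eqP (iotaP cnta hi0)) nthl //.
Qed.

End Abs.

Unset Implicit Arguments.

Theorem mainTheorem8 (V : finType) (hV : #|V| = 6) :
  B_factorizable [set: edge V].
Proof.
pose g (i : 'I_6) : V := enum_val (cast_ord (esym hV) i).
pose h (x : V) : 'I_6 := cast_ord hV (enum_rank x).
apply: (@mainAbs V g h).
- by move=> i; rewrite /g /h enum_valK cast_ordKV.
- by move=> x; rewrite /h /g cast_ordK enum_rankK.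
Qed.
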